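(* Let $A$ and $B$ be rings, $f: A\to B$ a ring homomorphism and $J$ a proper ideal of $B$. Let $S$ be the set of regular central elements of $B$ (central elements that are not zero divisors), and assume $J\cap S\neq\varnothing$. Then $A\bowtie^{f}J$ is a weak Armendariz ring if and only if both $A$ and $f(A)+J$ are weak Armendariz rings.
   Context: All rings are associative with identity (not necessarily commutative), ring homomorphisms are unital, and ideals are two-sided. $\mathrm{nil}(R)$ denotes the set of nilpotent elements of a ring $R$. For a ring homomorphism $f:A\to B$ and an ideal $J$ of $B$, the amalgamation is the subring $A\bowtie^{f}J=\{(a,f(a)+j)\mid a\in A,\ j\in J\}$ of $A\times B$; $f(A)+J=\{f(a)+j: a\in A, j\in J\}$ is a subring of $B$. A ring $R$ is weak Armendariz if whenever $p(x)=\sum_{i=0}^n a_ix^i$ and $q(x)=\sum_{j=0}^m b_jx^j$ in $R[x]$ satisfy $p(x)q(x)=0$, then $a_ib_j\in\mathrm{nil}(R)$ for all $i,j$. *)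

(* Defs.v *)
From HB Require Import structures.
From mathcomp Require Import all_boot all_order all_algebra.
Set Implicit Arguments. Unset Strict Implicit. Unset Printing Implicit Defensive.
Import GRing.Theory.
Local Open Scope ring_scope.

Definition is_nilpotent (R : nzRingType) (x : R) : Prop := exists n : nat, x ^+ n = 0.

(* Polynomials over the subring S are the polynomials of {poly R} with all
   coefficients in S; multiplication and powers in S agree with those of R. *)
Definition weak_armendariz_sub (R : nzRingType) (S : R -> Prop) : Prop :=
  forall p q : {poly R}, (forall i, S p`_i) -> (forall i, S q`_i) ->
    p * q = 0 -> forall i j, is_nilpotent (p`_i * q`_j).

Definition weak_armendariz (R : nzRingType) : Prop :=
  forall p q : {poly R}, p * q = 0 -> forall i j, is_nilpotent (p`_i * q`_j).

Definition two_sided_ideal (R : nzRingType) (J : R -> Prop) : Prop :=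
  [/\ J 0, (forall x y, J x -> J y -> J (x + y)), (forall x, J x -> J (- x)),
      (forall r x, J x -> J (r * x)) & (forall r x, J x -> J (x * r))].

Definition proper_two_sided_ideal (R : nzRingType) (J : R -> Prop) : Prop :=
  two_sided_ideal J /\ exists b, ~ J b.

Definition regular_central (R : nzRingType) (s : R) : Prop :=
  (forall b, s * b = b * s) /\ (forall b, s * b = 0 -> b = 0) /\ (forall b, b * s = 0 -> b = 0).

Definition amalg (A B : nzRingType) (f : A -> B) (J : B -> Prop) : (A * B)%type -> Prop :=
  fun x => exists a j, J j /\ x = (a, f a + j).

Definition fApJ (A B : nzRingType) (f : A -> B) (J : B -> Prop) : B -> Prop :=
  fun b => exists a j, J j /\ b = f a + j.

Arguments is_nilpotent {R} x.
Arguments weak_armendariz_sub {R} S.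
Arguments two_sided_ideal {R} J.
Arguments proper_two_sided_ideal {R} J.
Arguments regular_central {R} s.
Arguments amalg {A B} f J _.
Arguments fApJ {A B} f J _.

(* Main.v *)
Require Import Defs.
From HB Require Import structures.
From mathcomp Require Import all_boot all_order all_algebra.
Local Open Scope ring_scope.
Import GRing.Theory.

Lemma pair_poly_eq0 (A B : nzRingType) (R : {poly (A * B)%type}) :
  (forall k, (R`_k).1 = 0) -> (forall k, (R`_k).2 = 0) -> R = 0.
Proof.
move=> h1 h2; apply/polyP => k; rewrite coef0.
by case E: (R`_k) => [x y]; have := h1 k; have := h2 k; rewrite E /= => -> ->.
Qed.

Lemma fst_coefM (A B : nzRingType) (P Q : {poly (A * B)%type}) k :
  ((P * Q)`_k).1 = (map_poly fst P * map_poly fst Q)`_k.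
Proof. by rewrite -(rmorphM (map_poly fst)) coef_map. Qed.

Lemma snd_coefM (A B : nzRingType) (P Q : {poly (A * B)%type}) k :
  ((P * Q)`_k).2 = (map_poly snd P * map_poly snd Q)`_k.
Proof. by rewrite -(rmorphM (map_poly snd)) coef_map. Qed.

Lemma reg_pow (B : nzRingType) (s : B) : regular_central s ->
  forall k b, s ^+ k * b = 0 -> b = 0.
Proof.
move=> [_ [hr _]]; elim=> [|k IH] b; first by rewrite expr0 mul1r.
by rewrite exprS -mulrA => /hr /IH.
Qed.

Theorem theorem4p1 (A B : nzRingType) (f : {rmorphism A -> B}) (J : B -> Prop)
  (hJ : proper_two_sided_ideal J) (hS : exists s, J s /\ regular_central s) :
  weak_armendariz_sub (amalg f J) <->
  (weak_armendariz A /\ weak_armendariz_sub (fApJ f J)).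
Proof.
case: hJ => [[J0 JD JN JL JR] _]; case: hS => s [Js sreg].
split.
- move=> H; split.
  + move=> p q pq i j.
    pose g := fun a : A => (a, f a).
    have g0 : g 0 = 0 by rewrite /g rmorph0.
    have HP : forall (r : {poly A}) k, (map_poly g r)`_k = (r`_k, f r`_k).
      by move=> r k; rewrite coef_map_id0.
    have h1 : forall k, amalg f J ((map_poly g p)`_k).
      by move=> k; rewrite HP; exists (p`_k), 0; rewrite addr0.
    have h2 : forall k, amalg f J ((map_poly g q)`_k).
      by move=> k; rewrite HP; exists (q`_k), 0; rewrite addr0.
    have h3 : map_poly g p * map_poly g q = 0.
      apply: pair_poly_eq0 => k.
        rewrite fst_coefM !coefM; rewrite (eq_bigr (fun l : 'I_k.+1 => p`_l * q`_(k - l))).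
          by rewrite -coefM pq coef0.
        by move=> l _; rewrite !coef_map_id0.
      rewrite snd_coefM !coefM; rewrite (eq_bigr (fun l : 'I_k.+1 => f (p`_l * q`_(k - l)))).
        by rewrite -rmorph_sum -coefM pq coef0 rmorph0.
      by move=> l _; rewrite !coef_map_id0 // rmorphM.
    have [n hn] := H _ _ h1 h2 h3 i j.
    exists n.
      have := congr1 fst hn; rewrite rmorphXn /= !HP /=.
      by [].
  + move=> p q _ _ pq i j.
    pose g := fun b : B => ((0 : A), s * b).
    have g0 : g 0 = 0 by rewrite /g mulr0.
    have HP : forall (r : {poly B}) k, (map_poly g r)`_k = (0, s * r`_k).
      by move=> r k; rewrite coef_map_id0.
    have amg : forall (r : {poly B}) k, amalg f J ((map_poly g r)`_k).
      by move=> r k; rewrite HP; exists 0, (s * r`_k); rewrite rmorph0 add0r; split=> //; apply: JR.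
    have h3 : map_poly g p * map_poly g q = 0.
      apply: pair_poly_eq0 => k.
        rewrite fst_coefM !coefM big1 // => l _; by rewrite !coef_map_id0 // mul0r.
      rewrite snd_coefM !coefM.
      rewrite (eq_bigr (fun l : 'I_k.+1 => (s * s) * (p`_l * q`_(k - l)))).
        by rewrite -mulr_sumr -coefM pq coef0 mulr0.
      move=> l _; rewrite !coef_map_id0 //=.
      case: sreg => sc _.
      by rewrite -!mulrA; congr (_ * _); rewrite !mulrA sc.
    have [n hn] := H _ _ (amg p) (amg q) h3 i j.
    exists n.
      have := congr1 snd hn; rewrite rmorphXn /= !HP /=.
      have -> : s * p`_i * (s * q`_j) = s * s * (p`_i * q`_j).
        by case: sreg => sc _; rewrite -!mulrA; congr (_ * _); rewrite !mulrA sc.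
      have sc := sreg.1.
      rewrite exprMn_comm; last first.
        by rewrite /GRing.comm -mulrA sc (sc (p`_i * q`_j)) -mulrA.
      rewrite exprMn_comm; last exact: commr_refl.
      by rewrite -mulrA => /(@reg_pow _ _ sreg)/(@reg_pow _ _ sreg).
- move=> [HA HB] P Q hP hQ PQ i j.
  have h1 : map_poly fst P * map_poly fst Q = 0 by rewrite -(rmorphM (map_poly fst)) PQ (rmorph0 (map_poly fst)).
  have [n hn] := HA _ _ h1 i j; rewrite !coef_map in hn.
  have hP2 : forall k, fApJ f J ((map_poly snd P)`_k).
    by move=> k; rewrite coef_map; case: (hP k) => a [b [Jb ->]]; exists a, b.
  have hQ2 : forall k, fApJ f J ((map_poly snd Q)`_k).
    by move=> k; rewrite coef_map; case: (hQ k) => a [b [Jb ->]]; exists a, b.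
  have h2 : map_poly snd P * map_poly snd Q = 0 by rewrite -(rmorphM (map_poly snd)) PQ (rmorph0 (map_poly snd)).
  have [m hm] := HB _ _ hP2 hQ2 h2 i j; rewrite !coef_map in hm.
  exists (n + m).
  have e1 : ((P`_i * Q`_j) ^+ (n + m)).1 = 0.
    by rewrite (rmorphXn fst) (rmorphM fst) exprD hn mul0r.
  have e2 : ((P`_i * Q`_j) ^+ (n + m)).2 = 0.
    by rewrite (rmorphXn snd) (rmorphM snd) addnC exprD hm mul0r.
  by move: e1 e2; case: ((P`_i * Q`_j) ^+ (n + m)) => u v /= -> ->.
Qed.
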